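(* Let $m,n$ be positive integers. For any $(A,\boldsymbol{\gamma})\in[0,1)^{m\times n}\times[0,1)^m$, we have $(A,\boldsymbol{\gamma})\in\Omega(m,n)$ if and only if $S_l(A,\boldsymbol{\gamma})<+\infty$ for all $l\in\mathbb{N}$.
   Context: $[0,1)^{m\times n}$ is the set of real $m\times n$ matrices with entries in $[0,1)$. For $\boldsymbol{x}\in\mathbb{R}^n$, $\|\boldsymbol{x}\|=\max_i|x_i|$; for $\boldsymbol{y}\in\mathbb{R}^m$, $\langle\boldsymbol{y}\rangle=\min_{\boldsymbol{p}\in\mathbb{Z}^m}\|\boldsymbol{y}-\boldsymbol{p}\|$. For $\psi:\mathbb{N}\to[0,\infty)$, $W_{m,n}(\psi)$ is the set of pairs $(A,\boldsymbol{\gamma})$ such that $\langle A\boldsymbol{q}-\boldsymbol{\gamma}\rangle<\psi(\|\boldsymbol{q}\|)$ for infinitely many $\boldsymbol{q}\in\mathbb{Z}^n$. ''Decreasing'' means non-increasing. $\mathcal{D}$ is the set of decreasing $\psi:\mathbb{N}\to[0,\infty)$ with $\sum_{q\ge1}q^{n-1}\psi(q)^m=\infty$; $\Omega(m,n)=\bigcap_{\psi\in\mathcal{D}}W_{m,n}(\psi)$. For $l\in\mathbb{N}$, $S_l(A,\boldsymbol{\gamma})=\sum_{t=l}^\infty t^{n-1}\min_{\boldsymbol{q}\in\mathbb{Z}^n,\ l\le\|\boldsymbol{q}\|\le t}\langle A\boldsymbol{q}-\boldsymbol{\gamma}\rangle^m$. *)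

(* Defs.v *)
From HB Require Import structures.
From mathcomp Require Import all_boot all_order all_algebra.
From mathcomp Require Import all_classical all_reals.
From mathcomp Require Import ereal topology normedtype sequences.
Set Implicit Arguments. Unset Strict Implicit. Unset Printing Implicit Defensive.
Import Order.TTheory GRing.Theory Num.Theory.
Local Open Scope classical_set_scope.
Local Open Scope ring_scope.

Section Defs.
Variable R : realType.

Definition normZ (n : nat) (q : 'cV[int]_n) : nat := \max_(i < n) `|q i ord0|%N.

Definition normR (m : nat) (y : 'cV[R]_m) : R :=
  \big[Num.max/0]_(i < m) `|y i ord0|.

Definition distZ (m : nat) (y : 'cV[R]_m) : R :=
  inf [set normR (y - map_mx (fun z : int => z%:~R) p) | p in [set: 'cV[int]_m]].

Definition Aqg (m n : nat) (A : 'M[R]_(m, n)) (g : 'cV[R]_m) (q : 'cV[int]_n)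
  : 'cV[R]_m := A *m map_mx (fun z : int => z%:~R) q - g.

Definition W (m n : nat) (psi : nat -> R) (A : 'M[R]_(m, n)) (g : 'cV[R]_m) : Prop :=
  ~ finite_set [set q : 'cV[int]_n | distZ (Aqg A g q) < psi (normZ q)].

(* psi : N -> [0,oo) decreasing (non-increasing) on N = {1,2,...};
   the value psi 0 is irrelevant. *)
Definition decreasing_nonneg (psi : nat -> R) : Prop :=
  (forall q, (1 <= q)%N -> 0 <= psi q) /\
  (forall q1 q2, (1 <= q1)%N -> (q1 <= q2)%N -> psi q2 <= psi q1).

Definition inD (m n : nat) (psi : nat -> R) : Prop :=
  decreasing_nonneg psi /\
  (\sum_(1 <= q <oo) (((q%:R : R) ^+ (n.-1) * psi q ^+ m)%:E) = +oo)%E.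

Definition Omega (m n : nat) (A : 'M[R]_(m, n)) (g : 'cV[R]_m) : Prop :=
  forall psi : nat -> R, inD m n psi -> W psi A g.

Definition S (m n : nat) (l : nat) (A : 'M[R]_(m, n)) (g : 'cV[R]_m) : \bar R :=
  (\sum_(l <= t <oo)
     (((t%:R : R) ^+ (n.-1) *
       inf [set distZ (Aqg A g q) ^+ m |
            q in [set q : 'cV[int]_n | (l <= normZ q <= t)%N]])%:E))%E.

Definition unit_entries (m n : nat) (A : 'M[R]_(m, n)) : Prop :=
  forall i j, 0 <= A i j /\ A i j < 1.

End Defs.

(* Main.v *)
Require Import Defs.
From HB Require Import structures.
From mathcomp Require Import all_boot all_order all_algebra.
From mathcomp Require Import all_classical all_reals.
From mathcomp Require Import ereal topology normedtype sequences exp.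
From mathcomp Require Import zify.
Import Order.TTheory GRing.Theory Num.Theory.
Local Open Scope classical_set_scope.
Local Open Scope ring_scope.

Section H.
Variable R : realType.
Local Open Scope ereal_scope.


Lemma ser_cmp (u v : nat -> R) (l : nat) :
  (forall t, (l <= t)%N -> (0 <= u t)%R) -> (forall t, (l <= t)%N -> (u t <= v t)%R) ->
  \sum_(l <= t <oo) (u t)%:E <= \sum_(l <= t <oo) (v t)%:E.
Proof.
move=> u0 uv.
have := @lee_nneseries R (fun t => if (l <= t)%N then (u t)%:E else 0)
   (fun t => if (l <= t)%N then (v t)%:E else 0) xpredT l.
have E : forall w : nat -> R, \sum_(l <= t <oo) (w t)%:E = \sum_(l <= t <oo | xpredT t) (if (l <= t)%N then (w t)%:E else 0).
  move=> w; apply/congr_lim/funext => k; rewrite big_nat_cond [RHS]big_nat_cond.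
  by apply: eq_bigr => i /andP[/andP[-> _] _].
rewrite !E; apply.
  by move=> i li _; rewrite li lee_fin; exact: u0.
by move=> i _; case: ifP => // H; rewrite lee_fin uv.
Qed.

Lemma ser_split (u : nat -> R) (a b : nat) :
  (forall t, (a <= t)%N -> (0 <= u t)%R) -> (a <= b)%N ->
  \sum_(a <= t <oo) (u t)%:E = (\sum_(a <= t < b) u t)%R%:E + \sum_(b <= t <oo) (u t)%:E.
Proof.
move=> u0 ab; rewrite (@nneseries_split R _ a (b - a)); last by move=> k /u0; rewrite lee_fin.
by rewrite subnKC // sumEFin.
Qed.

Lemma ser_up (u : nat -> R) (a b : nat) :
  (forall t, (a <= t)%N -> (0 <= u t)%R) -> (a <= b)%N ->
  \sum_(b <= t <oo) (u t)%:E = +oo -> \sum_(a <= t <oo) (u t)%:E = +oo.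
Proof. by move=> u0 ab h; rewrite (@ser_split u a b u0 ab) h addey. Qed.

Lemma ser_down (u : nat -> R) (a b : nat) :
  (forall t, (a <= t)%N -> (0 <= u t)%R) -> (a <= b)%N ->
  \sum_(a <= t <oo) (u t)%:E = +oo -> \sum_(b <= t <oo) (u t)%:E = +oo.
Proof.
move=> u0 ab; rewrite (@ser_split u a b u0 ab).
have : 0 <= \sum_(b <= t <oo) (u t)%:E.
  by apply: nneseries_ge0 => k bk _; rewrite lee_fin u0 // (leq_trans ab).
by case: (\sum_(b <= t <oo) (u t)%:E).
Qed.

Local Close Scope ereal_scope.


Lemma normR_ge0 m (y : 'cV[R]_m) : 0 <= normR y.
Proof.
rewrite /normR; elim/big_ind: _ => //= x z hx hz.
by rewrite le_max hx.
Qed.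

Lemma distZ_ge0 m (y : 'cV[R]_m) : 0 <= distZ y.
Proof.
apply: lb_le_inf.
  by exists (normR (y - map_mx (fun z : int => z%:~R) 0)); exists 0.
by move=> x [p _ <-]; exact: normR_ge0.
Qed.

Lemma inf_anti (E1 E2 : set R) : E1 `<=` E2 -> nonempty E1 -> has_lbound E2 ->
  inf E2 <= inf E1.
Proof.
move=> s ne lb; apply: lb_le_inf => // x /s; exact: ge_inf.
Qed.

Lemma normZ_const n k : (0 < n)%N -> normZ (const_mx k%:Z : 'cV[int]_n) = k.
Proof.
move=> n0; rewrite /normZ.
under eq_bigr do rewrite mxE.
rewrite big_const_ord; case: n n0 => // n _.
by elim: n => [|n ih]; [rewrite /= maxn0 | rewrite iterS ih maxnn].
Qed.

Lemma finite_ball n l : finite_set [set q : 'cV[int]_n | (normZ q < l)%N].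
Proof.
pose f := fun v : 'cV['I_(l + l).+1]_n => \col_i ((v i ord0 : nat)%:Z - l%:Z) : 'cV[int]_n.
apply: (@sub_finite_set _ _ (f @` setT)); last first.
  by apply: finite_image; exact: finite_finset.
move=> q /= hq.
exists (\col_i (inord (absz (q i ord0 + l%:Z)))) => //.
apply/matrixP => i j.
have -> : j = ord0 by apply: ord_inj; case: j => [[]].
rewrite !mxE.
have hi : (`|q i ord0| < l)%N.
  apply: leq_ltn_trans hq.
  exact: (@leq_bigmax _ (fun i : 'I_n => `|q i ord0|%N) i).
rewrite inordK; lia.
Qed.

Lemma finite_bounded n (E : set 'cV[int]_n) : finite_set E ->
  exists L, forall q, E q -> (normZ q < L)%N.
Proof.
move=> /finite_fsetP [X ->].
exists (\max_(q <- finmap.enum_fset X) normZ q).+1 => q /= hq.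
rewrite ltnS; apply: leq_bigmax_seq => //.
Qed.
End H.

Theorem lemma2p1 (R : realType) (m n : nat) (hm : (0 < m)%N) (hn : (0 < n)%N)
  (A : 'M[R]_(m, n)) (g : 'cV[R]_m)
  (hA : unit_entries A) (hg : unit_entries g) :
  Omega A g <-> (forall l : nat, (1 <= l)%N -> (S l A g < +oo)%E).
Proof.
split.
- move=> HO l hl.
  rewrite ltNge leye_eq; apply/negP => /eqP Sinf.
  pose Dset t := [set distZ (Aqg A g q) ^+ m | q in [set q : 'cV[int]_n | (l <= normZ q <= t)%N]].
  have Dne : forall t, (l <= t)%N -> nonempty (Dset t).
    move=> t lt; exists (distZ (Aqg A g (const_mx l%:Z)) ^+ m); exists (const_mx l%:Z) => //.
    by rewrite /= normZ_const // leqnn lt.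
  have Dlb : forall t, has_lbound (Dset t).
    by move=> t; exists 0 => x [q _ <-]; rewrite exprn_ge0 // distZ_ge0.
  pose c t := inf (Dset (maxn t l)).
  have c0 : forall t, 0 <= c t.
    move=> t; apply: lb_le_inf; first by apply: Dne; exact: leq_maxr.
    by move=> x [q _ <-]; rewrite exprn_ge0 // distZ_ge0.
  pose psi t := c t `^ (m%:R^-1).
  have psim : forall t, psi t ^+ m = c t.
    move=> t; rewrite -powR_mulrn ?powR_ge0 // -powRrM mulVf ?powRr1 //.
    by rewrite pnatr_eq0 -lt0n.
  have hD : inD m n psi.
    split; first split.
    + by move=> q _; exact: powR_ge0.
    + move=> q1 q2 _ h; apply: ge0_ler_powR; rewrite ?nnegrE ?invr_ge0 ?ler0n ?c0 //.
      apply: inf_anti => //; last by apply: Dne; exact: leq_maxr.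
      move=> x [q /andP[a b] <-]; exists q => //; apply/andP; split => //.
      apply: leq_trans b _; lia.
    + apply: (@ser_up R (fun q => (q%:R ^+ n.-1 * psi q ^+ m)) 1 l) => //.
        by move=> t _; rewrite mulr_ge0 // exprn_ge0 // powR_ge0.
      rewrite -Sinf /S; apply/congr_lim/funext => k.
      rewrite big_nat_cond [RHS]big_nat_cond; apply: eq_bigr => i /andP[/andP[li _] _].
      by rewrite psim /c (maxn_idPl li).
  apply: (HO psi hD).
  apply: (@sub_finite_set _ _ [set q : 'cV[int]_n | (normZ q < l)%N]); last exact: finite_ball.
  move=> q /= hq.
  rewrite ltnNge; apply/negP => lq.
  have h2 : distZ (Aqg A g q) ^+ m < psi (normZ q) ^+ m.
    by rewrite ltrXn2r ?distZ_ge0 // -lt0n.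
  move: h2; rewrite psim /c (maxn_idPl lq) ltNge => /negP; apply.
  by apply: (ge_inf (Dlb (normZ q))); exists q => //; rewrite /= lq leqnn.
- move=> HS psi [[psi0 psidec] Hsum] Hfin.
  have [L HL] := @finite_bounded n _ Hfin.
  pose l := maxn L 1.
  have hl : (1 <= l)%N by rewrite /l; lia.
  have := HS l hl; apply/negP; rewrite -leNgt.
  have key : (\sum_(l <= t <oo) ((t%:R ^+ n.-1 * psi t ^+ m)%:E) = +oo)%E.
    apply: (@ser_down R (fun t => (t%:R ^+ n.-1 * psi t ^+ m)) 1 l) => //.
    by move=> t t1; rewrite mulr_ge0 // exprn_ge0 // psi0.
  rewrite -key /S; apply: ser_cmp.
    by move=> t lt; rewrite mulr_ge0 // exprn_ge0 // psi0 // (leq_trans hl lt).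
  move=> t lt; apply: ler_wpM2l; first by rewrite exprn_ge0.
  apply: lb_le_inf.
    exists (distZ (Aqg A g (const_mx l%:Z)) ^+ m); exists (const_mx l%:Z) => //.
    by rewrite /= normZ_const // leqnn lt.
  move=> x [q /andP[lq qt] <-].
  have q1 : (1 <= normZ q)%N by apply: leq_trans lq.
  apply: lerXn2r; rewrite ?nnegrE ?distZ_ge0 ?psi0 //; first exact: leq_trans q1 qt.
  apply: le_trans (psidec _ _ q1 qt) _.
  rewrite leNgt; apply/negP => h.
  have := HL q h; rewrite ltnNge => /negP; apply.
  apply: leq_trans lq; rewrite /l; lia.
Qed.
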